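(* Let $G$ be a spectrally threshold dominated graph on $n$ nodes with $m$ edges. Then there exists a threshold graph $T$ on $n$ nodes with $m$ edges such that $LE(T)\ge LE(G)$.
   Context: All graphs are finite and simple. For a graph $G$ on node set $\{1,\dots,n\}$ with edge set $E$, $m=|E|$, the Laplacian matrix is $L(G)=D(G)-A(G)$ (degree matrix minus adjacency matrix); its eigenvalues, the Laplacian eigenvalues of $G$, are denoted $\lambda_1(G)\ge\lambda_2(G)\ge\dots\ge\lambda_n(G)=0$. The Laplacian energy is $LE(G)=\sum_{i=1}^n\left|\lambda_i(G)-\frac{2m}{n}\right|$. A threshold graph is a graph obtainable from the empty graph by repeatedly adding a new node that is either isolated or adjacent to all previously added nodes. For a graph with degrees $d_1\ge\dots\ge d_n$, the conjugate degrees are $d_i^*=|\{j: d_j\ge i\}|$; for a threshold graph $T$ one has $\lambda_i(T)=d_i^*(T)$ for all $i$. A graph $G$ on $n$ nodes with $m$ edges is spectrally threshold dominated if for each $k\in\{1,\dots,n\}$ there is a threshold graph $T_k$ on $n$ nodes with $m$ edges satisfying $\sum_{i=1}^k\lambda_i(T_k)\ge\sum_{i=1}^k\lambda_i(G)$. *)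

(* Defs.v *)
From HB Require Import structures.
From mathcomp Require Import all_boot all_order all_algebra all_fingroup.
From Stdlib Require Import ClassicalEpsilon.
Set Implicit Arguments. Unset Strict Implicit. Unset Printing Implicit Defensive.
Import Order.TTheory GRing.Theory Num.Theory.
Local Open Scope ring_scope.

(* A (finite, simple) graph on node set 'I_n (= {1,...,n} shifted to 0-based)
   is an adjacency relation; it is simple when symmetric and irreflexive. *)
Definition simple_graph (n : nat) (G : rel 'I_n) : Prop :=
  symmetric G /\ irreflexive G.

Definition deg (n : nat) (G : rel 'I_n) (i : 'I_n) : nat := #|[set j | G i j]|.

Definition nedges (n : nat) (G : rel 'I_n) : nat :=
  #|[set p : 'I_n * 'I_n | (p.1 < p.2)%N && G p.1 p.2]|.

Definition laplacian (R : rcfType) (n : nat) (G : rel 'I_n) : 'M[R]_n :=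
  \matrix_(i, j) ((if i == j then (deg G i)%:R else 0) - (G i j)%:R).

Definition is_lap_spectrum (R : rcfType) (n : nat) (G : rel 'I_n) (s : seq R) : Prop :=
  [/\ size s = n, sorted (fun x y : R => y <= x) s &
      char_poly (laplacian R G) = \prod_(x <- s) ('X - x%:P)].

(* The Laplacian spectrum (exists and is unique for a real symmetric matrix). *)
Arguments laplacian R {n} G.
Arguments is_lap_spectrum R {n} G s.

Definition lap_spectrum (R : rcfType) (n : nat) (G : rel 'I_n) : seq R :=
  epsilon (inhabits [::]) (is_lap_spectrum R G).

(* lambda_{i+1}(G), 0-based index i *)
Definition lap_eig (R : rcfType) (n : nat) (G : rel 'I_n) (i : nat) : R :=
  nth 0 (lap_spectrum R G) i.

Arguments lap_spectrum R {n} G.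
Arguments lap_eig R {n} G i.

Definition lap_energy (R : rcfType) (n : nat) (G : rel 'I_n) : R :=
  \sum_(i < n) `|lap_eig R G i - (2 * nedges G)%:R / n%:R|.

Arguments lap_energy R {n} G.

(* Threshold graph: nodes can be ordered s(0), ..., s(n-1) (order of addition)
   with bits b such that the j-th added node is adjacent to all previously
   added nodes if b j, and to none of them otherwise. *)
Definition threshold_graph (n : nat) (G : rel 'I_n) : Prop :=
  simple_graph G /\
  exists (s : 'S_n) (b : 'I_n -> bool),
    forall i j : 'I_n, (i < j)%N -> G (s i) (s j) = b j.

Definition spec_threshold_dominated (R : rcfType) (n : nat) (G : rel 'I_n) : Prop :=
  forall k : nat, (1 <= k <= n)%N ->
    exists T : rel 'I_n,
      [/\ threshold_graph T, nedges T = nedges G &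
          \sum_(i < k) lap_eig R T i >= \sum_(i < k) lap_eig R G i].
Arguments spec_threshold_dominated R {n} G.

(* Main.v *)
Require Import Defs.
From mathcomp Require Import all_boot all_order all_algebra all_fingroup.
From mathcomp Require Import sesquilinear spectral mxred complex.
From mathcomp Require Import lra.
From Stdlib Require Import ClassicalEpsilon.
Import Order.TTheory GRing.Theory Num.Theory.
Local Open Scope ring_scope.
Lemma char_poly_conj (F : fieldType) n (P D : 'M[F]_n) : P \in unitmx ->
  char_poly (invmx P *m D *m P) = char_poly D.
Proof.
move=> Pu; rewrite /char_poly.
have XE : map_mx polyC (invmx P) *m 'X%:M *m map_mx polyC P = 'X%:M.
  by rewrite mul_mx_scalar -scalemxAl -map_mxM mulVmx // map_mx1 scalemx1.
have -> : char_poly_mx (invmx P *m D *m P) =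
   map_mx polyC (invmx P) *m char_poly_mx D *m map_mx polyC P.
  by rewrite /char_poly_mx mulmxBr mulmxBl XE !map_mxM.
rewrite !det_mulmx mulrAC -det_mulmx -map_mxM mulVmx // map_mx1 det1 mul1r //.
Qed.


Section Spec.
Variable R : rcfType.
Local Notation C := (complex R).
Local Notation toC := (real_complex R).

Lemma lap_sym n (G : rel 'I_n) : symmetric G ->
  forall i j, laplacian R G i j = laplacian R G j i.
Proof.
move=> Gs i j; rewrite !mxE Gs eq_sym.
by case: eqP => // ->.
Qed.

Lemma conjR (z : R) : ((z%:C)%C : C)^* = (z%:C)%C.
Proof. by rewrite conj_Creal //; apply/complex_realP; exists z. Qed.

Lemma lap_spec_exists n (G : rel 'I_n) : symmetric G ->
  exists s, is_lap_spectrum R G s.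
Proof.
move=> Gs.
set L := laplacian R G.
set A : 'M[C]_n := map_mx toC L.
have Aherm : A \is hermsymmx.
  apply/is_hermitianmxP; rewrite expr0 scale1r; apply/matrixP => i j.
  rewrite !mxE conjR; congr (_%:C)%C.
  by rewrite Gs eq_sym; case: eqP => // ->.
have /orthomx_spectralP Aeq := hermitian_normalmx Aherm.
have Dreal := hermitian_spectral_diag_real Aherm.
set D := spectral_diag A in Aeq Dreal.
set r := fun i : 'I_n => complex.Re (D 0 i).
have Dr : forall i, D 0 i = toC (r i).
  by move=> i; rewrite /r RRe_real //; exact: (mxOverP Dreal).
have cpL : char_poly L = \prod_(i < n) ('X - (r i)%:P).
  apply: (@map_poly_inj _ _ toC).
  rewrite map_char_poly -/A Aeq char_poly_conj ?spectral_unit //.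
  rewrite char_poly_trig ?diag_mx_is_trig // rmorph_prod.
  by apply: eq_bigr => i _; rewrite /= map_polyXsubC !mxE eqxx mulr1n Dr.
exists (sort (fun x y : R => y <= x) [seq r i | i <- enum 'I_n]); split.
- by rewrite size_sort size_map size_enum_ord.
- by apply: sort_sorted => x y; exact: le_total.
- rewrite cpL (perm_big _ (permEl (perm_sort _ _))) big_map big_enum //.
Qed.
End Spec.
Lemma handshake n (G : rel 'I_n) : simple_graph G ->
  (\sum_(i < n) deg G i = 2 * nedges G)%N.
Proof.
move=> [Gs Gi].
have degE i : deg G i = (\sum_(j < n) G i j)%N.
  rewrite /deg -sum1_card big_mkcond /=; apply: eq_bigr => j _.
  by rewrite inE; case: (G i j).
have neE : nedges G = (\sum_(i < n) \sum_(j < n) ((i < j)%N && G i j))%N.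
  rewrite /nedges -sum1_card big_mkcond /=. rewrite pair_bigA /=.
  by apply: eq_bigr => -[i j] _; rewrite inE /=; case: (_ && _).
have split1 i j : (G i j : nat) = (((i < j)%N && G i j) + ((j < i)%N && G i j))%N.
  by case: (ltngtP i j) => [h|h|/val_inj ->] /=; [case: (G i j)|case: (G i j)|rewrite Gi].
under eq_bigr do rewrite degE.
rewrite neE mul2n -addnn.
under eq_bigr do under eq_bigr do rewrite split1.
under eq_bigr do rewrite big_split /=.
rewrite big_split /=; congr (_ + _)%N.
rewrite exchange_big; apply: eq_bigr => i _; apply: eq_bigr => j _.
by rewrite Gs.
Qed.
Section Abs.
Variable R : realDomainType.

Lemma split_sum (f : nat -> R) n k : (k <= n)%N ->
  \sum_(i < n) f i = \sum_(i < k) f i + \sum_(k <= i < n) f i.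
Proof.
move=> kn; rewrite -!(big_mkord xpredT) (big_cat_nat (leq0n k) kn) //.
Qed.
Arguments split_sum f {n k}.

Lemma le_absum (f : nat -> R) n k : (k <= n)%N -> \sum_(i < n) f i = 0 ->
  2 * \sum_(i < k) f i <= \sum_(i < n) `|f i|.
Proof.
move=> kn; rewrite (split_sum f kn) (split_sum (fun i => `|f i|) kn) => s0.
have h1 : \sum_(i < k) f i <= \sum_(i < k) `|f i| by apply: ler_sum => i _; exact: ler_norm.
have h2 : \sum_(k <= i < n) - f i <= \sum_(k <= i < n) `|f i|.
  by apply: ler_sum => i _; rewrite -normrN; exact: ler_norm.
rewrite sumrN in h2; lra.
Qed.

Lemma eq_absum (s : seq R) d n : size s = n -> sorted (fun x y => y <= x) s ->
  \sum_(i < n) (s`_i - d) = 0 -> (0 < n)%N ->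
  exists2 k, (1 <= k <= n)%N & \sum_(i < n) `|s`_i - d| = 2 * \sum_(i < k) (s`_i - d).
Proof.
move=> sz srt s0 n0.
set k0 := find (fun v => v <= d) s.
have k0n : (k0 <= n)%N by rewrite -sz find_size.
have key : \sum_(i < n) `|s`_i - d| = 2 * \sum_(i < k0) (s`_i - d).
  rewrite (split_sum (fun i => `|s`_i - d|) k0n).
  rewrite (split_sum (fun i => s`_i - d) k0n) in s0.
  have e1 : \sum_(i < k0) `|s`_i - d| = \sum_(i < k0) (s`_i - d).
    apply: eq_bigr => i _; apply: ger0_norm.
    have := before_find 0 (ltn_ord i); rewrite -/k0 => /negbT.
    by rewrite -ltNge subr_ge0 => /ltW.
  have e2 : \sum_(k0 <= i < n) `|s`_i - d| = \sum_(k0 <= i < n) - (s`_i - d).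
    rewrite big_nat_cond [RHS]big_nat_cond.
    apply: eq_bigr => i /andP[/andP[ki iN] _]; apply: ler0_norm.
    have hk : (k0 < size s)%N by rewrite sz (leq_ltn_trans ki iN).
    have hd : s`_k0 <= d by apply: (@nth_find _ 0 (fun v => v <= d)); rewrite has_find.
    have : s`_i <= s`_k0.
      have tr : transitive (fun x y : R => y <= x).
        by move=> x y z hxy hyz; exact: le_trans hyz hxy.
      apply: (sorted_leq_nth tr (fun x => le_refl x) 0 srt) => //.
      by rewrite sz.
    by move=> hi; rewrite subr_le0; exact: le_trans hi hd.
  rewrite e1 e2 sumrN; lra.
case: (posnP k0) => [k00|k0p].
  exists n; first by rewrite n0 leqnn.
  rewrite key k00 big_ord0 mulr0.
  rewrite (split_sum (fun i => s`_i - d) k0n) k00 big_ord0 add0r in s0.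
  rewrite -[\sum_(i < n) _](big_mkord xpredT (fun i => s`_i - d)) s0; lra.
by exists k0 => //; rewrite k0p.
Qed.
End Abs.
Arguments le_absum {R} f {n k}.
Arguments eq_absum {R s d n}.


Section Main.
Variable R : rcfType.

Lemma lap_spectrumP n (G : rel 'I_n) : symmetric G ->
  is_lap_spectrum R G (lap_spectrum R G).
Proof.
move=> Gs; rewrite /lap_spectrum; apply: epsilon_spec; exact: lap_spec_exists.
Qed.
Arguments lap_spectrumP {n G}.

Lemma lap_trace n (G : rel 'I_n) : simple_graph G ->
  \sum_(i < n) lap_eig R G i = (2 * nedges G)%:R.
Proof.
move=> sG; have [Gs Gi] := sG.
rewrite -handshake // natr_sum.
case: n G sG Gs Gi => [|n] G sG Gs Gi; first by rewrite !big_ord0.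
have [sz _ cp] := lap_spectrumP Gs.
rewrite /lap_eig; set s := lap_spectrum R G in sz cp *.
have := char_poly_trace (laplacian R G) (ltn0Sn n).
have h := @coefPn_prod_XsubC _ s; rewrite sz in h.
rewrite cp h // => /oppr_inj.
rewrite (big_nth 0) big_mkord sz => ->.
rewrite /mxtrace; apply: eq_bigr => i _; rewrite !mxE eqxx Gi subr0 //.
Qed.

End Main.

Theorem theorem1 (R : rcfType) (n : nat) (G : rel 'I_n) :
  simple_graph G ->
  spec_threshold_dominated R G ->
  exists T : rel 'I_n,
    [/\ threshold_graph T, nedges T = nedges G & lap_energy R T >= lap_energy R G].
Proof.
move=> sG hdom.
case: (posnP n) => [n0|npos].
  exists G; split => //.
  split => //; exists 1%g, (fun _ => true) => i; have := ltn_ord i; by rewrite {2}n0 ltn0.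
set d : R := (2 * nedges G)%:R / n%:R.
have nR : n%:R != 0 :> R by rewrite pnatr_eq0 -lt0n.
have [Gs Gi] := sG.
have [szG srtG _] := @lap_spectrumP R _ _ Gs.
have sumG0 : \sum_(i < n) (lap_eig R G i - d) = 0.
  rewrite sumrB lap_trace // sumr_const card_ord /d -[X in _ - X]mulr_natr divfK //.
  by rewrite subrr.
have [k /andP[k1 kn] eqG] := eq_absum szG srtG sumG0 npos.
have [T [thT neT sumT]] := hdom k (introT andP (conj k1 kn)).
exists T; split => //.
have [[Ts Ti] _] := thT.
have sumT0 : \sum_(i < n) (lap_eig R T i - d) = 0.
  rewrite sumrB lap_trace // neT sumr_const card_ord /d -[X in _ - X]mulr_natr divfK //.
  by rewrite subrr.
have leT := le_absum (fun i => lap_eig R T i - d) kn sumT0.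
rewrite /lap_energy neT -/d.
have -> : \sum_(i < n) `|lap_eig R G i - d| = 2 * \sum_(i < k) (lap_eig R G i - d) by exact: eqG.
apply: le_trans leT.
rewrite !sumrB; lra.
Qed.
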